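(* Let $q\ge2$, $n\ge1$, $m=n+1$, $R\in[m]$ and $r\equiv m\pmod R$ with $0\le r<R$. Then $$\max_{{\boldsymbol y}\in\Sigma_{q,R}^m}\mathsf{H}^{\mathsf{In}}_{1\text{-}\mathsf{Ins}}({\boldsymbol y})=\log_2 m-\frac1m\left(r\left\lceil\tfrac mR\right\rceil\log_2\left\lceil\tfrac mR\right\rceil+(R-r)\left\lfloor\tfrac mR\right\rfloor\log_2\left\lfloor\tfrac mR\right\rfloor\right),$$ and the maximum is attained only by balanced channel outputs.
   Context: $\Sigma_q=\{0,\dots,q-1\}$. For sequences ${\boldsymbol x}$ of length $\ell$ and ${\boldsymbol y}$ of length $N\ge\ell$, $\omega_{{\boldsymbol x}}({\boldsymbol y})$ is the number of index tuples $1\le i_1<\dots<i_\ell\le N$ with $y_{i_j}=x_j$. The $1$-insertion channel with input length $n$ maps ${\boldsymbol x}\in\Sigma_q^n$ to ${\boldsymbol y}\in\Sigma_q^{n+1}$ with probability $\omega_{{\boldsymbol x}}({\boldsymbol y})/((n+1)q)$; under uniform transmission ($X$ uniform on $\Sigma_q^n$), $\mathsf{H}^{\mathsf{In}}_{1\text{-}\mathsf{Ins}}({\boldsymbol y})=H(X\mid Y={\boldsymbol y})$ in bits, with posterior $P({\boldsymbol x}\mid {\boldsymbol y})=\Pr\{{\boldsymbol y}\mid{\boldsymbol x}\}/\sum_{{\boldsymbol x}'}\Pr\{{\boldsymbol y}\mid{\boldsymbol x}'\}$. A run is a maximal block of identical consecutive symbols; $\Sigma_{q,R}^m$ is the set of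 sequences in $\Sigma_q^m$ with exactly $R$ runs. A sequence in $\Sigma_{q,R}^m$ is balanced if it has $r$ runs of length $\lceil m/R\rceil$ and $R-r$ runs of length $\lfloor m/R\rfloor$, where $r\equiv m\pmod R$. Convention $0\log0=0$. *)

(* Defs.v *)
From HB Require Import structures.
From mathcomp Require Import all_boot all_order all_algebra.
From mathcomp Require Import reals exp.
Set Implicit Arguments. Unset Strict Implicit. Unset Printing Implicit Defensive.
Import Order.TTheory GRing.Theory Num.Theory.
Local Open Scope ring_scope.

(* Sigma_q^N is N.-tuple 'I_q. *)

(* omega_x(y): number of index sets {i_1<...<i_l} (increasing enumeration of
   S : {set 'I_N}) such that the subsequence of y at S equals x. *)
Definition omega (q l N : nat) (x : l.-tuple 'I_q) (y : N.-tuple 'I_q) : nat :=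
  #|[set S : {set 'I_N} | [seq tnth y i | i <- enum S] == val x]|.

Definition ins_prob (F : realType) (q n : nat)
  (x : n.-tuple 'I_q) (y : n.+1.-tuple 'I_q) : F :=
  (omega x y)%:R / (n.+1 * q)%:R.

(* Posterior P(x | y) under uniform input. *)
Definition posterior (F : realType) (q n : nat)
  (y : n.+1.-tuple 'I_q) (x : n.-tuple 'I_q) : F :=
  ins_prob F x y / \sum_(x' : n.-tuple 'I_q) ins_prob F x' y.

Definition log2 (F : realType) (p : F) : F := ln p / ln 2.

Definition xlog2x (F : realType) (p : F) : F :=
  if p == 0 then 0 else p * log2 p.

Definition Hin (F : realType) (q n : nat) (y : n.+1.-tuple 'I_q) : F :=
  - \sum_(x : n.-tuple 'I_q) xlog2x (posterior F y x).

Fixpoint runlens_aux (T : eqType) (a : T) (k : nat) (s : seq T) : seq nat :=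
  match s with
  | [::] => [:: k]
  | b :: s' => if b == a then runlens_aux a k.+1 s' else k :: runlens_aux b 1 s'
  end.

Definition runlens (T : eqType) (s : seq T) : seq nat :=
  match s with [::] => [::] | a :: s' => runlens_aux a 1 s' end.

Definition nruns (T : eqType) (s : seq T) : nat := size (runlens s).

Definition ceil_div (m R : nat) : nat := if (R %| m)%N then (m %/ R)%N else (m %/ R).+1.

Definition balanced (T : eqType) (m R : nat) (s : seq T) : bool :=
  perm_eq (runlens s) (nseq (m %% R) (ceil_div m R) ++ nseq (R - m %% R) (m %/ R))%N.

(* Main.v *)
Require Import Defs.
From HB Require Import structures.
From mathcomp Require Import all_boot all_order all_algebra.
From mathcomp Require Import reals exp.
From mathcomp Require Import sequences.
From mathcomp Require Import zify ring lra.
Import Order.TTheory GRing.Theory Num.Theory.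
Local Open Scope ring_scope.
Set Implicit Arguments. Unset Strict Implicit.

Section Runs.
Variable T : eqType.

Definition rm (s : seq T) i := take i s ++ drop i.+1 s.
Definition Dl (s : seq T) := [seq rm s i | i <- iota 0 (size s)].

Lemma map_const_nseq (A B : Type) (c : B) (s : seq A) :
  [seq c | _ <- s] = nseq (size s) c.
Proof. by elim: s => //= ? ? ->. Qed.

Lemma Dl_cat k a t : Dl (nseq k a ++ t) =
  nseq k (nseq k.-1 a ++ t) ++ map (cat (nseq k a)) (Dl t).
Proof.
rewrite /Dl size_cat size_nseq iotaD map_cat; congr (_ ++ _).
  transitivity [seq nseq k.-1 a ++ t | _ <- iota 0 k].
    apply/eq_in_map => i; rewrite mem_iota => /andP[_ hi] /=.
    rewrite /rm take_cat drop_cat size_nseq hi take_nseq.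
    case: ltnP => hik.
      rewrite drop_nseq catA -nseqD; congr (nseq _ _ ++ _); lia.
    have -> : (i.+1 - k = 0)%N by lia.
    rewrite drop0; congr (nseq _ _ ++ _); lia.
    lia.
  by rewrite map_const_nseq size_iota.
have -> : iota (0 + k) (size t) = map (addn k) (iota 0 (size t)) by rewrite -iotaDl addn0.
rewrite -!map_comp; apply: eq_map => j /=.
rewrite /rm take_cat drop_cat size_nseq ltnNge leq_addr /=.
rewrite ltnNge (leq_trans (leq_addr j k) (leqnSn _)) /= addKn -addnS addKn.
by rewrite catA.
Qed.

Variable V : zmodType.
Variable g : nat -> V.

Definition HG (L : seq (seq T)) := \sum_(w <- L) g (count_mem w L).

Lemma HG_split k u p L3 : u \notin map (cat p) L3 ->
  HG (nseq k u ++ map (cat p) L3) = g k *+ k + HG L3.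
Proof.
move=> hu; rewrite /HG big_cat /= big_nseq iter_addr_0 big_map.
rewrite count_cat count_nseq /= eqxx mul1n (count_memPn hu) addn0; congr (_ + _).
rewrite big_seq [in RHS]big_seq; apply: eq_bigr => v hv.
rewrite count_cat count_nseq.
have -> : (pred1 (p ++ v) u) = false.
  apply/negbTE; apply: contra hu => /eqP ->; exact: map_f.
rewrite mul0n add0n count_map; congr (g _); apply: eq_count => w /=.
by rewrite eqseq_cat // eqxx.
Qed.

Lemma runs_main k a s :
  HG (Dl (nseq k.+1 a ++ s)) = \sum_(l <- runlens_aux a k.+1 s) g l *+ l.
Proof.
elim: s a k => [|b s IH] a k.
  rewrite Dl_cat.
  have -> : Dl [::] = map (cat (nseq k.+1 a)) [::] by [].
  by rewrite HG_split // /HG big_nil addr0 /= big_seq1.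
case: (eqVneq b a) => [->|nba].
  have -> : nseq k.+1 a ++ a :: s = nseq k.+2 a ++ s.
    by rewrite -cat1s catA -[[:: a]]/(nseq 1 a) -nseqD addn1.
  have -> : runlens_aux a k.+1 (a :: s) = runlens_aux a k.+2 s by rewrite /= eqxx.
  exact: IH.
have -> : runlens_aux a k.+1 (b :: s) = k.+1 :: runlens_aux b 1 s.
  by rewrite /= (negbTE nba).
rewrite Dl_cat HG_split.
  by rewrite big_cons -(IH b 0%N).
apply/mapP => -[w _] /=.
have -> : a :: nseq k a ++ w = nseq k a ++ a :: w.
  by elim: (k) => // j /= <-.
move/eqP; rewrite eqseq_cat // eqxx /= eqseq_cons => /andP[/eqP ba _].
by rewrite ba eqxx in nba.
Qed.

End Runs.

Lemma runlens_aux_sum (T : eqType) (a : T) k s :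
  sumn (runlens_aux a k s) = (k + size s)%N.
Proof.
elim: s a k => [|b s IH] a k /=; first by rewrite addn0.
case: eqP => _ /=; rewrite IH; lia.
Qed.

Lemma runlens_aux_pos (T : eqType) (a : T) k s :
  (0 < k)%N -> all (fun l => 0 < l)%N (runlens_aux a k s).
Proof.
elim: s a k => [|b s IH] a k hk /=; first by rewrite hk.
by case: eqP => _ /=; rewrite ?hk IH.
Qed.

Lemma enum_setC1 N (i : 'I_N) : enum [set~ i] = [seq j <- enum 'I_N | j != i].
Proof. rewrite enumT -deprecated_filter_index_enum.
rewrite /index_enum /=. unlock. apply: eq_filter => j.
by rewrite -[_ j]/(j \in [set~ i]) in_setC1. Qed.

Lemma rm_enum (q N : nat) (y : N.-tuple 'I_q) (i : 'I_N) :
  [seq tnth y j | j <- enum [set~ i]] = rm y i.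
Proof.
pose x0 := tnth y i.
have -> : [seq tnth y j | j <- enum [set~ i]] =
          [seq nth x0 y j | j <- map val (enum [set~ i])].
  by rewrite -map_comp; apply: eq_map => j /=; rewrite (tnth_nth x0).
have -> : map val (enum [set~ i]) = filter (predC1 (val i)) (iota 0 N).
  by rewrite -val_enum_ord filter_map enum_setC1.
have hi := ltn_ord i.
have -> : iota 0 N = iota 0 i ++ (val i) :: iota i.+1 (N - i.+1).
  rewrite {1}(_ : N = i + (1 + (N - i.+1)))%N; last lia.
  by rewrite !iotaD add0n /= addn1.
rewrite filter_cat /= eqxx /=.
rewrite (all_filterP _) ?(all_filterP _); last 2 first.
- by apply/allP => j; rewrite mem_iota /=; lia.
- by apply/allP => j; rewrite mem_iota /=; lia.
rewrite map_cat map_nth_iota0 ?size_tuple ?(ltnW hi) //.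
rewrite map_nth_iota ?size_tuple // [take (N - _) _]take_oversize // size_drop size_tuple.
by [].
Qed.

Lemma card_count (T : finType) (P : pred T) : #|[set i | P i]| = count P (enum T).
Proof.
rewrite cardsE cardE -deprecated_filter_index_enum size_filter /index_enum.
by unlock; rewrite -enumT.
Qed.

Lemma omegaE q n (x : n.-tuple 'I_q) (y : n.+1.-tuple 'I_q) :
  omega x y = count_mem (val x) (Dl (val y)).
Proof.
rewrite /omega.
have -> : [set S : {set 'I_n.+1} | [seq tnth y i | i <- enum S] == val x] =
   [set [set~ i] | i in [set i : 'I_n.+1 | rm y i == val x]].
  apply/setP => S; rewrite inE; apply/idP/imsetP.
  - move=> /eqP hS.
    have hc : #|~: S| == 1%N.
      have := cardsC S; rewrite card_ord.
      have : #|S| = n by rewrite cardE -(size_map (tnth y)) hS size_tuple.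
      lia.
    case/cards1P: hc => i hi.
    have hS' : [set~ i] = S by rewrite -hi setCK.
    exists i; last by rewrite hS'.
    by rewrite inE -rm_enum hS' hS.
  - by case=> i; rewrite inE => hi ->; rewrite rm_enum.
rewrite card_imset; last by move=> i j /setC_inj /set1_inj.
rewrite card_count /Dl size_tuple -val_enum_ord -map_comp count_map.
rewrite enumT count_map; apply: eq_count => i /=.
by [].
Qed.

Lemma sum_tuple_count (F : comRingType) (T : finType) n (L : seq (seq T))
  (G : seq T -> F) : all (fun w => size w == n) L ->
  \sum_(x : n.-tuple T) (count_mem (val x) L)%:R * G (val x) = \sum_(w <- L) G w.
Proof.
elim: L => [|w L IH] /=.
  by rewrite big_nil big1 // => x _; rewrite mul0r.
case/andP => hw hL; rewrite big_cons -IH //.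
rewrite (eq_bigr (fun x : n.-tuple T => (w == val x)%:R * G (val x) +
    (count_mem (val x) L)%:R * G (val x))); last first.
  by move=> x _; rewrite /= natrD mulrDl.
rewrite big_split /=; congr (_ + _).
rewrite (bigD1 (Tuple hw)) //= eqxx mul1r big1 ?addr0 // => x hx.
suff -> : (w == val x) = false by rewrite mul0r.
apply/negbTE; apply: contra hx => /eqP hwx; apply/eqP/val_inj => /=.
by rewrite hwx.
Qed.

Lemma sum_ones (F : comRingType) (T : Type) (L : seq T) :
  \sum_(w <- L) (1 : F) = (size L)%:R.
Proof. by elim: L => [|w L IH]; rewrite ?big_nil // big_cons IH /= -add1n natrD. Qed.

Lemma size_Dl (T : eqType) (s : seq T) : all (fun w => size w == (size s).-1) (Dl s).
Proof.
apply/allP => w /mapP [i]; rewrite mem_iota add0n => /andP [_ hi] ->.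
rewrite /rm size_cat size_take size_drop hi; apply/eqP; lia.
Qed.

Definition phi (F : realType) (l : nat) : F := l%:R * ln l%:R.

Lemma HinE F q n (y : n.+1.-tuple 'I_q) : (0 < q)%N ->
  Hin F y = log2 (n.+1)%:R - (n.+1)%:R^-1 * ((\sum_(l <- runlens y) phi F l) / ln 2).
Proof.
move=> hq.
set N := n.+1.
set L := Dl (val y).
have hL : all (fun w => size w == n) L by have := size_Dl (val y); rewrite size_tuple.
have hN : (N%:R : F) != 0 by rewrite pnatr_eq0.
have hq' : (q%:R : F) != 0 by rewrite pnatr_eq0 -lt0n.
have hsum : \sum_(x : n.-tuple 'I_q) ins_prob F x y = N%:R / (N * q)%:R.
  rewrite /ins_prob -mulr_suml; congr (_ * _).
  rewrite (eq_bigr (fun x : n.-tuple 'I_q => (count_mem (val x) L)%:R * (fun _ => 1 : F) (val x))); last first.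
    by move=> x _; rewrite omegaE mulr1.
  rewrite (@sum_tuple_count F _ n L (fun _ => 1)) // sum_ones /L /Dl size_map size_iota size_tuple.
  by [].
have hpost : forall x, posterior F y x = (count_mem (val x) L)%:R / N%:R.
  move=> x; rewrite /posterior hsum /ins_prob omegaE -/L natrM.
  by field; rewrite hN hq' /= addrC natr1.
rewrite /Hin.
have -> : \sum_(x : n.-tuple 'I_q) xlog2x (posterior F y x) =
   \sum_(x : n.-tuple 'I_q) (count_mem (val x) L)%:R *
   (fun w => N%:R^-1 * log2 ((count_mem w L)%:R / N%:R)) (val x).
  apply: eq_bigr => x _; rewrite hpost /xlog2x /=.
  case: (count_mem (val x) L) => [|c]; first by rewrite mul0r eqxx mul0r.
  by rewrite mulf_eq0 invr_eq0 pnatr_eq0 (negbTE hN) /= mulrA.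
rewrite (@sum_tuple_count F _ n L (fun w => N%:R^-1 * log2 ((count_mem w L)%:R / N%:R))) //.
have [a [s hys]] : exists a s, val y = a :: s.
  case E: (val y) => [|a s]; last by exists a, s.
  by have := size_tuple y; rewrite (_ : size y = size (val y)) // E.
have hsz : size s = n by have := size_tuple y; rewrite hys /= => -[].
rewrite (_ : \sum_(w <- L) _ = HG (fun c => N%:R^-1 * log2 (c%:R / N%:R : F)) L) //.
rewrite /L hys -[a :: s]/(nseq 1 a ++ s) runs_main /runlens /=.
have hpos := runlens_aux_pos a s (ltn0Sn 0).
have hsn := runlens_aux_sum a 1 s.
rewrite big_seq (eq_bigr (fun l => N%:R^-1 * (ln 2)^-1 * phi F l - N%:R^-1 * log2 N%:R * l%:R)); last first.
  move=> l hl; have lpos := allP hpos l hl.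
  rewrite /log2 ln_div ?posrE ?ltr0n // /phi -mulr_natr.
  ring.
rewrite -big_seq sumrB -!mulr_sumr -natr_sum -sumnE hsn hsz add1n.
rewrite /runlens (_ : tval y = a :: s) //.
rewrite -/N [_ * N%:R]mulrAC mulVf // mul1r opprB [in RHS]mulrA [_ / ln 2 * _]mulrAC.
by [].
Qed.

Section Conv.
Variable F : realType.

Lemma ln_lt_sub1 (x : F) : 0 < x -> x != 1 -> ln x < x - 1.
Proof.
move=> hx hx1.
have h0 : ln x != 0 by rewrite ln_eq0.
have := expR_gt1Dx h0; rewrite lnK ?posrE //; lra.
Qed.

Definition d (k : nat) : F := phi F k.+1 - phi F k.

Lemma d_lt k : (1 <= k)%N -> d k < d k.+1.
Proof.
move=> hk.
have hK : (0 : F) < k%:R by rewrite ltr0n.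
have e1 : (k.+1%:R : F) = k%:R + 1 by rewrite -natr1.
have e2 : (k.+2%:R : F) = k%:R + 2 by rewrite -natr1 -natr1; ring.
have h1 : ln (k.+1%:R / k.+2%:R : F) < k.+1%:R / k.+2%:R - 1.
  apply: ln_lt_sub1; first by rewrite divr_gt0 ?ltr0n.
  rewrite e1 e2; apply/eqP => /(congr1 (fun z => z * (k%:R + 2))).
  rewrite mulfVK; first lra.
  apply/eqP => h; lra.
have h2 : ln (k.+1%:R / k%:R : F) < k.+1%:R / k%:R - 1.
  apply: ln_lt_sub1; first by rewrite divr_gt0 ?ltr0n.
  rewrite e1; apply/eqP => /(congr1 (fun z => z * k%:R)).
  rewrite mulfVK; first lra.
  apply/eqP => h; lra.
rewrite !ln_div ?posrE ?ltr0n // in h1 h2.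
have h1' : (k%:R + 2) * (ln k.+1%:R - ln k.+2%:R) < -1 :> F.
  have hp : (0:F) < k%:R + 2 by lra.
  rewrite -(ltr_pM2l hp) in h1.
  have : (k%:R + 2) * (k.+1%:R / k.+2%:R - 1) = -1 :> F.
    rewrite e1 e2; field; apply/eqP => h; lra.
  by move=> h; rewrite h in h1.
have h2' : k%:R * (ln k.+1%:R - ln k%:R) < 1 :> F.
  rewrite -(ltr_pM2l hK) in h2.
  have : k%:R * (k.+1%:R / k%:R - 1) = 1 :> F.
    rewrite e1; field; apply/eqP => h; lra.
  by move=> h; rewrite h in h2.
rewrite /d /phi.
move: h1' h2'; clear h1 h2.
set A := ln k%:R; set B := ln k.+1%:R; set C := ln k.+2%:R.
rewrite e1 e2 => h1 h2; nra.
Qed.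

Lemma d_le j k : (1 <= j)%N -> (j <= k)%N -> d j <= d k.
Proof.
move=> hj /subnKC <-; elim: (k - j)%N => [|i IH]; first by rewrite addn0.
by rewrite addnS (le_trans IH) // ltW // d_lt // (leq_trans hj) // leq_addr.
Qed.

Lemma phiS k : phi F k.+1 = phi F k + d k.
Proof. by rewrite /d addrC subrK. Qed.

Lemma up f j : (1 <= f)%N -> phi F f + j%:R * d f <= phi F (f + j).
Proof.
move=> hf; elim: j => [|j IH]; first by rewrite mul0r addr0 addn0.
rewrite addnS phiS -natr1 mulrDl mul1r addrA.
apply: (lerD IH); by apply: d_le => //; rewrite leq_addr.
Qed.

Lemma up2 f j : (1 <= f)%N -> phi F f + j.+2%:R * d f < phi F (f + j.+2).
Proof.
move=> hf; elim: j => [|j IH].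
  rewrite addn2 !phiS -addrA ltrD2l mulr2n mulrDl mul1r ltrD2l.
  by rewrite d_lt.
rewrite (addnS f j.+2) phiS -natr1 mulrDl mul1r addrA.
apply: (ltr_leD IH); by apply: d_le => //; rewrite leq_addr.
Qed.

Lemma down l j : (1 <= l)%N -> phi F (l + j) <= phi F l + j%:R * d (l + j).
Proof.
move=> hl; elim: j => [|j IH]; first by rewrite mul0r addr0 addn0.
rewrite addnS phiS -natr1 mulrDl mul1r.
have hd : d (l + j) <= d (l + j).+1.
  by apply: d_le; rewrite ?leqnSn // (leq_trans hl) // leq_addr.
rewrite [phi F l + _]addrA.
apply: (lerD _ hd); apply: (le_trans IH); rewrite lerD2l ler_wpM2l ?ler0n //.
Qed.

Lemma down2 l j : (1 <= l)%N -> phi F (l + j.+1) < phi F l + j.+1%:R * d (l + j.+1).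
Proof.
move=> hl; rewrite addnS phiS -natr1 mulrDl mul1r [phi F l + _]addrA.
apply: (@le_lt_trans _ _ (phi F l + j%:R * d (l + j) + d (l + j))).
  by rewrite lerD2r down.
have hl' : (1 <= l + j)%N by rewrite (leq_trans hl) // leq_addr.
apply: ler_ltD; last by rewrite d_lt.
by rewrite lerD2l ler_wpM2l ?ler0n // d_le.
Qed.

Definition lb f l : F := phi F f + (l%:R - f%:R) * d f.

Lemma conv f l : (1 <= f)%N -> (1 <= l)%N ->
  lb f l <= phi F l /\ ((l != f) && (l != f.+1) -> lb f l < phi F l).
Proof.
move=> hf hl; rewrite /lb.
case: (leqP f l) => hfl.
  move: (subnKC hfl) => <-; rewrite natrD addrAC subrr add0r.
  case: (l - f)%N => [|[|j]].
  - by rewrite addn0 eqxx /= mul0r addr0.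
  - by rewrite addn1 eqxx andbF mul1r phiS.
  - split; [exact: ltW (up2 _ hf) | by move=> _; exact: up2].
move: (subnKC (ltnW hfl)) => <-.
have -> : (f - l = (f - l).-1.+1)%N by lia.
set j := (f - l).-1.
have h := down2 j hl.
have lt : phi F (l + j.+1) + (l%:R - (l + j.+1)%:R) * d (l + j.+1) < phi F l.
  rewrite natrD opprD addrA subrr add0r mulNr; lra.
by split => //; apply: ltW.
Qed.
End Conv.

Section Main.
Variable F : realType.

Lemma sum_const_seq (T : Type) (L : seq T) (c : F) :
  \sum_(w <- L) c = c * (size L)%:R.
Proof. by rewrite -sum_ones mulr_sumr; apply: eq_bigr => _ _; rewrite mulr1. Qed.

Lemma sum_lb (rl : seq nat) R N : (0 < R)%N -> size rl = R -> sumn rl = N ->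
  \sum_(l <- rl) lb F (N %/ R) l =
  (N %% R)%:R * phi F (N %/ R).+1 + (R - N %% R)%:R * phi F (N %/ R).
Proof.
move=> hR hs hN.
set f := (N %/ R)%N; set r := (N %% R)%N.
have hrR : (r <= R)%N by apply: ltnW; rewrite ltn_mod.
have hNe : N = (f * R + r)%N by rewrite /f /r -divn_eq.
rewrite /lb big_split /= sum_const_seq -mulr_suml sumrB sum_const_seq.
rewrite -natr_sum -sumnE hN hs natrB // phiS hNe natrD natrM.
ring.
Qed.

Lemma sum_phi_ge (rl : seq nat) R N : (0 < R)%N -> (R <= N)%N -> size rl = R -> sumn rl = N ->
  all (fun l => 0 < l)%N rl ->
  (N %% R)%:R * phi F (N %/ R).+1 + (R - N %% R)%:R * phi F (N %/ R) <=
  \sum_(l <- rl) phi F l.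
Proof.
move=> hR hRN hs hN hpos.
have hf : (1 <= N %/ R)%N by rewrite divn_gt0.
rewrite -(sum_lb hR hs hN) big_seq [X in _ <= X]big_seq.
apply: ler_sum => l hl; exact: (conv F hf (allP hpos l hl)).1.
Qed.

Lemma sum_phi_eq (rl : seq nat) R N : (0 < R)%N -> (R <= N)%N -> size rl = R -> sumn rl = N ->
  all (fun l => 0 < l)%N rl ->
  (N %% R)%:R * phi F (N %/ R).+1 + (R - N %% R)%:R * phi F (N %/ R) =
  \sum_(l <- rl) phi F l ->
  all (fun l => (l == N %/ R)%N || (l == (N %/ R).+1)%N) rl.
Proof.
move=> hR hRN hs hN hpos.
have hf : (1 <= N %/ R)%N by rewrite divn_gt0.
rewrite -(sum_lb hR hs hN) => /eqP; rewrite eq_sym -subr_eq0 -sumrB => /eqP h.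
apply/allP => l hl; apply/negPn/negP; rewrite negb_or => hne.
have hlt := (conv F hf (allP hpos l hl)).2 hne.
have hge : forall i, i \in rl -> 0 <= phi F i - lb F (N %/ R) i.
  by move=> i hi; rewrite subr_ge0; exact: (conv F hf (allP hpos i hi)).1.
move: h; rewrite (perm_big _ (perm_to_rem hl)) big_cons => h.
have : 0 <= \sum_(i <- rem l rl) (phi F i - lb F (N %/ R) i).
  rewrite big_seq; apply: sumr_ge0 => i hi; apply: hge.
  exact: (mem_rem hi).
rewrite -subr_gt0 in hlt.
move=> h2.
have h3 : (phi F l - lb F (N %/ R)%N l) + \sum_(i <- rem l rl) (phi F i - lb F (N %/ R)%N i) = 0 :> F := h.
move: hlt h2 h3; clear.
set a := phi F l - _; set b := \sum_(i <- _) _.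
lra.
Qed.

Lemma runlens_aux_nseq (T : eqType) (a : T) k j t :
  runlens_aux a k (nseq j a ++ t) = runlens_aux a (k + j) t.
Proof.
elim: j k => [|j IH] k /=; first by rewrite addn0.
by rewrite eqxx IH addSnnS.
Qed.

Fixpoint build (T : Type) (a b : T) (L : seq nat) : seq T :=
  match L with
  | [::] => [::]
  | l :: L' => nseq l a ++ build b a L'
  end.

Lemma size_build (T : Type) (a b : T) L : size (build a b L) = sumn L.
Proof. by elim: L a b => [|l L IH] a b //=; rewrite size_cat size_nseq IH. Qed.

Lemma runlens_build (T : eqType) (a b : T) L : a != b ->
  all (fun l => 0 < l)%N L -> runlens (build a b L) = L.
Proof.
elim: L a b => [|l L IH] a b hab //= /andP [hl hL].
case: l hl => // l _ /=.
rewrite runlens_aux_nseq add1n.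
case: L IH hL => [|l2 L] IH hL /=; first by [].
case: l2 hL IH => // l2 hL IH /=.
rewrite eq_sym (negbTE hab).
have := IH b a _ hL; rewrite eq_sym => /(_ hab) /=.
by move=> ->.
Qed.

Lemma sumn_two (rl : seq nat) f :
  all (fun l => (l == f) || (l == f.+1)) rl ->
  sumn rl = (size rl * f + count_mem f.+1 rl)%N.
Proof.
elim: rl => [|l rl IH] //= /andP [hl /IH ->].
case/orP: hl => /eqP ->.
  have -> : (f == f.+1) = false by apply/negbTE; lia.
  simpl; lia.
rewrite eqxx /=; lia.
Qed.

End Main.

Lemma runlens_props (T : eqType) (s : seq T) : (0 < size s)%N ->
  sumn (runlens s) = size s /\ all (fun l => 0 < l)%N (runlens s).
Proof.
case: s => // a s _; rewrite /runlens runlens_aux_sum; split => //.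
exact: runlens_aux_pos.
Qed.

Lemma filter_pred1_nseq (s : seq nat) x :
  [seq i <- s | pred1 x i] = nseq (count_mem x s) x.
Proof.
rewrite -size_filter; apply/all_pred1P; exact: filter_all.
Qed.

Unset Implicit Arguments.
Theorem lemma9 (F : realType) (q n R : nat) :
  (2 <= q)%N -> (1 <= n)%N -> (1 <= R <= n.+1)%N ->
  let m := n.+1 in
  let r := (m %% R)%N in
  let V : F := log2 m%:R - m%:R^-1 *
      (r%:R * xlog2x (ceil_div m R)%:R + (R - r)%:R * xlog2x (m %/ R)%:R) in
  [/\ (exists y : m.-tuple 'I_q, nruns y = R /\ Hin F y = V),
      (forall y : m.-tuple 'I_q, nruns y = R -> Hin F y <= V) &
      (forall y : m.-tuple 'I_q, nruns y = R -> Hin F y = V -> balanced m R y)].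
Proof.
move=> hq hn /andP [hR1 hRN] m r V.
set f := (m %/ R)%N.
have hf : (1 <= f)%N by rewrite divn_gt0.
have hrR : (r < R)%N by rewrite ltn_mod.
have hmE : m = (f * R + r)%N by rewrite /f /r -divn_eq.
have l2 : (0 : F) < ln 2 by rewrite ln_gt0 // ltr1n.
have xE : forall k, xlog2x (k%:R : F) = phi F k / ln 2.
  move=> k; rewrite /xlog2x /phi /log2; case: k => [|k]; first by rewrite eqxx !mul0r.
  by rewrite pnatr_eq0 /= mulrA.
have hceilN : nseq r (ceil_div m R) = nseq r f.+1.
  rewrite /ceil_div; case: (eqVneq r 0%N) => [-> //|rn0].
  by rewrite /dvdn -/r (negbTE rn0).
have hceil : r%:R * xlog2x (ceil_div m R)%:R = r%:R * (phi F f.+1 / ln 2) :> F.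
  rewrite xE /ceil_div; case: (eqVneq r 0%N) => [->|rn0]; first by rewrite !mul0r.
  by rewrite /dvdn -/r (negbTE rn0).
have VE : V = log2 m%:R - m%:R^-1 * ((r%:R * phi F f.+1 + (R - r)%:R * phi F f) / ln 2).
  by rewrite /V hceil xE -/f mulrDl !mulrA.
have hq0 : (0 < q)%N by apply: leq_trans hq.
have hm0 : (0 : F) < m%:R^-1 by rewrite invr_gt0 ltr0n.
have hl2 : (0 : F) < (ln 2)^-1 by rewrite invr_gt0.
split.
- pose q0 : 'I_q := Ordinal hq0.
  pose q1 : 'I_q := Ordinal hq.
  pose L0 := nseq r f.+1 ++ nseq (R - r) f.
  have hL0pos : all (fun l => 0 < l)%N L0 by rewrite all_cat !all_nseq hf /= !orbT.
  have hsz : size (build q0 q1 L0) == m.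
    rewrite size_build sumn_cat !sumn_nseq hmE; apply/eqP; lia.
  have hrun : runlens (build q0 q1 L0) = L0.
    apply: runlens_build => //.
  exists (Tuple hsz); split.
    rewrite /nruns (_ : runlens (Tuple hsz) = L0) // size_cat !size_nseq; lia.
  rewrite (HinE F _ hq0) (_ : runlens (Tuple hsz) = L0) // VE -/m.
  congr (_ - _ * (_ / _)).
  by rewrite /L0 big_cat /= !big_nseq !iter_addr_0 !mulr_natl.
- move=> y hy; rewrite (HinE F y hq0) VE -/m lerD2l lerN2 ler_pM2l // ler_pM2r //.
  have := @runlens_props _ y; rewrite size_tuple => /(_ erefl) [hs hp].
  exact: (sum_phi_ge F hR1 hRN hy hs hp).
- move=> y hy hE.
  rewrite (HinE F y hq0) VE -/m in hE.
  have hE2 : (\sum_(l <- runlens y) phi F l) = r%:R * phi F f.+1 + (R - r)%:R * phi F f.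
    move/addrI/oppr_inj/(mulfI (lt0r_neq0 hm0)): hE.
    by move/(congr1 (fun z => z * ln 2)); rewrite !mulfVK // lt0r_neq0.
  have := @runlens_props _ y; rewrite size_tuple => /(_ erefl) [hs hp].
  have hall := @sum_phi_eq F _ _ _ hR1 hRN hy hs hp (esym hE2).
  have hc : count_mem f.+1 (runlens y) = r.
    have := sumn_two hall; rewrite hs -/f; move: hy; rewrite /nruns => ->; lia.
  rewrite /balanced -/r -/f hceilN -(perm_filterC (pred1 f.+1)).
  rewrite filter_pred1_nseq hc.
  have -> : [seq x <- runlens y | predC (pred1 f.+1) x] = nseq (R - r) f.
    rewrite -hc -hy /nruns -(count_predC (pred1 f.+1) (runlens y)) addKn -size_filter.
    apply/all_pred1P/allP => l; rewrite mem_filter /= => /andP [hl1 hl2'].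
    by have := allP hall l hl2'; rewrite -/f (negbTE hl1) orbF.
  exact: perm_refl.
Qed.
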